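(* Let $d\ge 1$, let $D\subset\mathbb{R}^d$ be Lebesgue measurable, let $r>0$ and let $f:D\to\mathbb{R}$ be any function. Then the function $osc_r f:D\to[0,\infty]$, $$(osc_r f)(x):=\sup_{y\in B_r(x)\cap D} f(y)-\inf_{y\in B_r(x)\cap D} f(y),$$ is Lebesgue measurable.
   Context: $B_r(x):=\{y\in\mathbb{R}^d: |y-x|<r\}$ denotes the open Euclidean ball of radius $r$ centred at $x$. *)

(* Defs.v *)
From HB Require Import structures.
From mathcomp Require Import all_boot all_order all_algebra.
From mathcomp Require Import all_classical all_reals all_analysis.
From mathcomp Require Import measurable_realfun.
Set Implicit Arguments. Unset Strict Implicit. Unset Printing Implicit Defensive.
Import Order.TTheory GRing.Theory Num.Theory.
Local Open Scope classical_set_scope.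
Local Open Scope ring_scope.

(* Points of R^d are row vectors 'rV[R]_d; coordinate i of x is x ord0 i. *)

Definition edist (R : realType) (d : nat) (x y : 'rV[R]_d) : R :=
  Num.sqrt (\sum_(i < d) (y ord0 i - x ord0 i) ^+ 2).

Definition eball (R : realType) (d : nat) (x : 'rV[R]_d) (r : R) : set 'rV[R]_d :=
  [set y | edist x y < r].

Definition obox (R : realType) (d : nat) (a b : 'rV[R]_d) : set 'rV[R]_d :=
  [set x | forall i : 'I_d, a ord0 i < x ord0 i /\ x ord0 i < b ord0 i].

Definition bvol (R : realType) (d : nat) (a b : 'rV[R]_d) : R :=
  \prod_(i < d) Num.max (b ord0 i - a ord0 i) 0.

Definition lebesgue_outer (R : realType) (d : nat) (A : set 'rV[R]_d) : \bar R :=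
  ereal_inf [set s : \bar R | exists a b : nat -> 'rV[R]_d,
    A `<=` \bigcup_k obox (a k) (b k) /\
    s = (\sum_(0 <= k <oo) (bvol (a k) (b k))%:E)%E].

Definition Lmeasurable (R : realType) (d : nat) (A : set 'rV[R]_d) : Prop :=
  (@lebesgue_outer R d).-caratheodory A.

Definition osc (R : realType) (d : nat) (D : set 'rV[R]_d) (r : R)
  (f : 'rV[R]_d -> R) (x : 'rV[R]_d) : \bar R :=
  (ereal_sup [set (f y)%:E | y in eball x r `&` D]
   - ereal_inf [set (f y)%:E | y in eball x r `&` D])%E.

(* Main.v *)
Require Import Defs.
From HB Require Import structures.
From mathcomp Require Import all_boot all_order all_algebra.
From mathcomp Require Import all_classical all_reals all_analysis.
From mathcomp Require Import measurable_realfun.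
From mathcomp Require Import ring lra.
Import Order.TTheory GRing.Theory Num.Theory.
Local Open Scope classical_set_scope.
Local Open Scope ring_scope.

Definition pT (R : realType) (d : nat) := 'rV[R]_d.
HB.instance Definition _ R d := Choice.on (pT R d).
HB.instance Definition _ R d := isPointed.Build (pT R d) 0.

Section boxes.
Variables (R : realType) (n : nat).
Local Notation d := n.+1.
Local Notation V := 'rV[R]_d.

Lemma bvol_ge0 (a b : V) : 0 <= bvol a b.
Proof. by apply: prodr_ge0 => i _; rewrite le_max lexx orbT. Qed.

Lemma bvol0 {a b : V} i : b ord0 i <= a ord0 i -> bvol a b = 0.
Proof.
move=> hi; rewrite /bvol (bigD1 i) //=.
have -> : Num.max (b ord0 i - a ord0 i) 0 = 0.
  by apply/max_idPr; rewrite subr_le0.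
by rewrite mul0r.
Qed.

Definition mid (a b : V) : V := \row_j ((a ord0 j + b ord0 j) / 2).
Definition upd (c : V) (i : 'I_d) (v : R) : V :=
  \row_j (if j == i then v else c ord0 j).

Lemma mid_in (a b : V) : (forall i, a ord0 i < b ord0 i) -> obox a b (mid a b).
Proof.
move=> h i; rewrite /mid mxE; have := h i => hi.
split; lra.
Qed.

Arguments mid_in {a b}.

Lemma upd_in (a b c : V) i v : obox a b c -> a ord0 i < v < b ord0 i ->
  obox a b (upd c i v).
Proof.
move=> hc /andP[h1 h2] j; rewrite /upd mxE.
by case: eqP => [->|_]; [split|exact: hc].
Qed.

Lemma obox_sub (a b a' b' : V) : (forall i, a ord0 i < b ord0 i) ->
  obox a b `<=` obox a' b' ->
  forall i, a' ord0 i <= a ord0 i /\ b ord0 i <= b' ord0 i.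
Proof.
move=> h sub i; have c_in := mid_in h.
split; rewrite leNgt; apply/negP => lt.
- set m := Num.min (a' ord0 i) (b ord0 i).
  have am : a ord0 i < m by rewrite lt_min lt h.
  have mb : m <= b ord0 i by rewrite ge_min lexx orbT.
  have ma : m <= a' ord0 i by rewrite ge_min lexx.
  have := sub _ (@upd_in a b _ i ((a ord0 i + m) / 2) c_in
    (ltac:(apply/andP; split; lra))).
  move=> /(_ i) [+ _]; rewrite /upd mxE eqxx; lra.
- set m := Num.max (b' ord0 i) (a ord0 i).
  have mb : m < b ord0 i by rewrite gt_max lt h.
  have am : a ord0 i <= m by rewrite le_max lexx orbT.
  have ma : b' ord0 i <= m by rewrite le_max lexx.
  have := sub _ (@upd_in a b _ i ((b ord0 i + m) / 2) c_in
    (ltac:(apply/andP; split; lra))).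
  move=> /(_ i) [_]; rewrite /upd mxE eqxx; lra.
Qed.

Arguments obox_sub {a b a' b'}.

Lemma bvol_eq (a b a' b' : V) : obox a b = obox a' b' -> bvol a b = bvol a' b'.
Proof.
move=> e.
have [h|] := pselect (forall i, a ord0 i < b ord0 i).
  have h' : forall i, a' ord0 i < b' ord0 i.
    move=> i; have := mid_in h; rewrite e => /(_ i) []; lra.
  have s1 := obox_sub h (ltac:(by rewrite e; exact: subset_refl)).
  have s2 := obox_sub h' (ltac:(by rewrite -e; exact: subset_refl)).
  rewrite /bvol; apply: eq_bigr => i _.
  have [? ?] := s1 i; have [? ?] := s2 i.
  have -> : a ord0 i = a' ord0 i by lra.
  have -> : b ord0 i = b' ord0 i by lra.
  by [].
move=> /existsNP [i /negP]; rewrite -leNgt => hi.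
rewrite (bvol0 _ hi).
have [h'|] := pselect (forall i, a' ord0 i < b' ord0 i).
  by have := mid_in h'; rewrite -e => /(_ i) []; lra.
by move=> /existsNP [j /negP]; rewrite -leNgt => hj; rewrite (bvol0 _ hj).
Qed.

Lemma obox0 : obox (0 : V) 0 = set0.
Proof. by apply/seteqP; split => // x /(_ ord0) []; rewrite mxE; lra. Qed.

End boxes.
Arguments upd {R n}.
Arguments mid {R n}.

Section outer.
Variables (R : realType) (n : nat).
Local Notation d := n.+1.
Local Notation V := 'rV[R]_d.
Local Open Scope ereal_scope.

Definition Gall : set (set (pT R d)) := setT.
Local Notation TA := (g_sigma_algebraType Gall).

Definition mub (A : set TA) : \bar R :=
  ereal_inf [set (bvol ab.1 ab.2)%:E | ab in [set ab : V * V | A = obox ab.1 ab.2]].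

Lemma mub_obox (a b : V) : mub (obox a b) = (bvol a b)%:E.
Proof.
rewrite /mub (_ : [set _ | _ in _] = [set (bvol a b)%:E]) ?ereal_inf1 //.
apply/seteqP; split => [_ [[a' b'] /= e <-]|_ ->]; first by rewrite /= -(@bvol_eq R n _ _ _ _ e).
by exists (a, b).
Qed.

Lemma mub0 : mub set0 = 0.
Proof. by rewrite -(obox0 R n) mub_obox (@bvol0 R n _ _ ord0) // mxE. Qed.

Lemma mub_ge0 X : 0 <= mub X.
Proof. by apply: le_ereal_inf_tmp => _ [ab _ <-]; rewrite lee_fin bvol_ge0. Qed.

Lemma mub_box (A : set TA) : mub A != +oo -> exists ab : V * V, A = obox ab.1 ab.2.
Proof.
apply: contraNP => /forallNP h; rewrite /mub.
rewrite (_ : [set _ | _ in _] = set0) ?ereal_inf0 //.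
by apply/seteqP; split => // _ [ab /= e _]; case: (h ab).
Qed.

Lemma mA (A : set TA) : measurable A.
Proof. exact: sub_sigma_algebra. Qed.

Lemma leb_eq (X : set V) : lebesgue_outer X = mu_ext mub X.
Proof.
apply/eqP; rewrite eq_le; apply/andP; split.
- apply: le_ereal_inf_tmp => _ [F [_ XF] <-].
  have [[k ioo]|] := pselect (exists k, mub (F k) = +oo).
    rewrite (eseries_pinfty _ _ ioo) ?leey// => m _.
    by rewrite -ltNye (lt_le_trans _ (mub_ge0 _)).
  move=> /forallNP h.
  have hb k : exists ab : V * V, F k = obox ab.1 ab.2.
    by apply: mub_box; apply/eqP; exact: h k.
  have [ab hab] := choice hb.
  rewrite (eq_eseriesr (fun k _ => (congr1 mub (hab k)))).
  rewrite (eq_eseriesr (fun k _ => mub_obox _ _)).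
  rewrite /lebesgue_outer; apply: ereal_inf_lbound => /=; exists (fun k => (ab k).1); exists (fun k => (ab k).2).
  split => //.
  by move=> x /XF [k _ Fx]; exists k => //; rewrite -hab.
- apply: le_ereal_inf_tmp => _ [a [b [XF ->]]].
  rewrite /mu_ext; apply: ereal_inf_lbound; exists (fun k => obox (a k) (b k)).
    by split => // i; exact: (mA (obox (a i) (b i))).
  by apply: eq_eseriesr => k _; exact: mub_obox.
Qed.

Lemma leb0 : lebesgue_outer (set0 : set V) = 0.
Proof. by rewrite leb_eq (mu_ext0 mub0 mub_ge0). Qed.

Lemma leb_ge0 (X : set V) : 0 <= lebesgue_outer X.
Proof. by rewrite leb_eq (mu_ext_ge0 mub_ge0). Qed.

Lemma leb_le : {homo (@lebesgue_outer R d) : A B / A `<=` B >-> A <= B}.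
Proof. by move=> A B AB; rewrite !leb_eq; exact: le_mu_ext. Qed.

Lemma leb_sub : sigma_subadditive (@lebesgue_outer R d).
Proof.
move=> F; rewrite leb_eq.
rewrite (eq_eseriesr (fun k _ => leb_eq (F k))).
exact: (mu_ext_sigma_subadditive mub_ge0).
Qed.

End outer.

HB.instance Definition _ (R : realType) (n : nat) :=
  isOuterMeasure.Build R (pT R n.+1) (@lebesgue_outer R n.+1)
   (@leb0 R n) (@leb_ge0 R n) (@leb_le R n) (@leb_sub R n).

Arguments leb_ge0 {R n} X.
Arguments leb_le {R n} [x y].
Arguments leb_sub {R n} F.
Arguments leb_eq {R n} X.
Section meas.
Variables (R : realType) (n : nat).
Local Notation d := n.+1.
Local Notation V := 'rV[R]_d.
Local Notation leb := (@lebesgue_outer R d).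
Local Notation U := (caratheodory_type (@lebesgue_outer R n.+1 : set (pT R n.+1) -> \bar R)).
Local Open Scope ereal_scope.

Lemma max_split (a b c : R) :
  (Num.max (b - Num.max a c) 0 + Num.max (Num.min b c - a) 0 = Num.max (b - a) 0)%R.
Proof.
case: (ltP a c) => h1; case: (ltP b c) => h2;
 case: (ltP (b - c) 0)%R => h3; case: (ltP (b - a) 0)%R => h4;
 case: (ltP (b - a) 0)%R => h5; case: (ltP (c - a) 0)%R => h6; lra.
Qed.

Definition cst (v : R) : V := \row_j v.
Definition hplane i c : set V := [set x | x ord0 i = c].
Definition hspace i c : set V := [set x | (c < x ord0 i)%R].

Lemma leb_le0 (A : set V) : (forall e : R, (0 < e)%R -> leb A <= e%:E) -> leb A = 0.
Proof.
move=> h; apply/eqP; rewrite eq_le leb_ge0 andbT.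
by apply/lee_addgt0Pr => e e0; rewrite add0e; exact: h.
Qed.

Lemma leb_obox (a b : V) : leb (obox a b) <= (bvol a b)%:E.
Proof.
rewrite /lebesgue_outer; apply: ereal_inf_lbound => /=.
exists (fun k => if k == 0%N then a else cst 0%R); exists (fun k => if k == 0%N then b else cst 0%R).
split.
  by move=> x hx; exists 0%N.
rewrite nneseries_recl //; last by move=> k _; rewrite lee_fin bvol_ge0.
rewrite eseries0 ?adde0 //= => k k1 _.
by case: eqP => [k0|_]; [rewrite k0 in k1|rewrite (@bvol0 R n _ _ ord0) // mxE].
Qed.

Lemma hplane_null i c : leb (hplane i c) = 0.
Proof.
pose P k := hplane i c `&` obox (cst (- (k.+1%:R : R))) (cst (k.+1%:R : R)).
have hP : hplane i c `<=` \bigcup_k P k.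
  move=> x hx.
  exists (Num.bound (\sum_j `|x ord0 j|))%R => //; split => // j.
  rewrite /cst !mxE.
  have hj : (`|x ord0 j| <= \sum_j `|x ord0 j|)%R.
    by rewrite (bigD1 j) //= lerDl sumr_ge0 // => *.
  set S := (\sum_j `|x ord0 j|)%R in hj *.
  have S0 : (0 <= S)%R by apply: sumr_ge0 => *.
  have hK := archi_boundP S0.
  have : (`|x ord0 j| < ((Num.bound S).+1%:R : R))%R.
    apply: (le_lt_trans hj); apply: (lt_trans hK); by rewrite ltr_nat.
  by rewrite ltr_norml => /andP[].
have hk k : leb (P k) = 0.
  apply: leb_le0 => e e0.
  pose M : R := (\prod_(j | j != i) Num.max ((k.+1%:R : R) - - (k.+1%:R : R)) 0)%R.
  have M0 : (0 <= M)%R by apply: prodr_ge0 => j _; rewrite le_max lexx orbT.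
  pose del := (e / (2 * (M + 1)))%R.
  have del0 : (0 < del)%R by rewrite divr_gt0 // mulr_gt0 // ltr_wpDl.
  pose a := upd (cst (- (k.+1%:R : R))) i (c - del)%R.
  pose b := upd (cst (k.+1%:R : R)) i (c + del)%R.
  have sub : P k `<=` obox a b.
    move=> x [hx hb] j; rewrite /a /b /upd !mxE.
    case: eqP => [->|_]; last by have := hb j; rewrite /cst !mxE.
    move: hx; rewrite /hplane /= => ->; split; lra.
  apply: le_trans (leb_le sub) _; apply: le_trans (leb_obox a b) _.
  rewrite lee_fin /bvol (bigD1 i) //= /a /b /upd !mxE eqxx.
  rewrite (eq_bigr (fun j => Num.max ((k.+1%:R : R) - - (k.+1%:R : R)) 0)%R); last first.
    by move=> j /negbTE hj; rewrite !mxE hj.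
  rewrite -/M.
  have -> : (Num.max (c + del - (c - del)) 0 = 2 * del)%R.
    by rewrite max_l; lra.
  have e2 : (2 * del * (M + 1) = e)%R.
    rewrite /del; field; lra.
  rewrite -e2 ler_wpM2l //; first lra.
  by rewrite lerDl.
apply: leb_le0 => e e0.
apply: le_trans (leb_le hP) _.
apply: le_trans (leb_sub _) _.
rewrite eseries0; first by rewrite lee_fin ltW.
by move=> k _ _; rewrite hk.
Qed.

Lemma hplane_meas i c : measurable (hplane i c : set U).
Proof.
apply: le_caratheodory_measurable => X /=.
have -> : leb (X `&` hplane i c) = 0.
  apply/eqP; rewrite eq_le leb_ge0 andbT -(hplane_null i c).
  by apply: leb_le; apply: subIsetr.
by rewrite add0e; apply: leb_le; apply: subIsetl.
Qed.

Lemma vol_split (a b : V) i c :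
  (bvol (upd a i (Num.max (a ord0 i) c)) b + bvol a (upd b i (Num.min (b ord0 i) c))
   = bvol a b)%R.
Proof.
rewrite /bvol (bigD1 i) //= [X in (_ + X)%R](bigD1 i) //= [RHS](bigD1 i) //=.
rewrite /upd !mxE eqxx.
rewrite (eq_bigr (fun j => Num.max (b ord0 j - a ord0 j) 0)%R); last first.
  by move=> j /negbTE hj; rewrite !mxE hj.
rewrite [X in (_ + _ * X)%R](eq_bigr (fun j => Num.max (b ord0 j - a ord0 j) 0)%R); last first.
  by move=> j /negbTE hj; rewrite !mxE hj.
by rewrite -mulrDl max_split.
Qed.

Lemma hspace_meas i c : measurable (hspace i c : set U).
Proof.
apply: le_caratheodory_measurable => X /=.
rewrite {3}/lebesgue_outer; apply: le_ereal_inf_tmp => _ [a [b [XF ->]]].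
pose a' k := upd (a k) i (Num.max (a k ord0 i) c).
pose b' k := upd (b k) i (Num.min (b k ord0 i) c).
have h1 : leb (X `&` hspace i c) <= \sum_(k <oo) (bvol (a' k) (b k))%:E.
  rewrite /lebesgue_outer; apply: ereal_inf_lbound; exists a'; exists b; split => //.
  move=> x [/XF [k _ hk] hx]; exists k => // j; rewrite /a' /upd mxE.
  case: eqP => [->|_]; last exact: hk.
  by have [h h'] := hk i; split => //; rewrite gt_max h hx.
have h2 : leb (X `&` ~` hspace i c) <= \sum_(k <oo) (bvol (a k) (b' k))%:E.
  have sub : X `&` ~` hspace i c `<=` (\bigcup_k obox (a k) (b' k)) `|` hplane i c.
    move=> x [/XF [k _ hk] /negP]; rewrite -leNgt le_eqVlt => /orP[/eqP e|lt].
      by right.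
    left; exists k => // j; rewrite /b' /upd mxE.
    case: eqP => [->|_]; last exact: hk.
    by have [h h'] := hk i; split => //; rewrite lt_min h' lt.
  apply: le_trans (leb_le sub) _.
  apply: le_trans (outer_measureU2 _ _ _) _ => /=.
  rewrite hplane_null adde0.
  rewrite /lebesgue_outer; apply: ereal_inf_lbound; exists a; exists b'; split => //.
apply: le_trans (leeD h1 h2) _.
rewrite -nneseriesD; last 2 first.
- by move=> k _ _; rewrite lee_fin bvol_ge0.
- by move=> k _ _; rewrite lee_fin bvol_ge0.
rewrite le_eqVlt; apply/orP; left; apply/eqP.
by apply: eq_eseriesr => k _; rewrite -EFinD vol_split.
Qed.

Lemma obox_meas (a b : V) : measurable (obox a b : set U).
Proof.
pose G k : set U := if (k < d)%N then
  hspace (inord k) (a ord0 (inord k)) `&`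
    ~` (hspace (inord k) (b ord0 (inord k)) `|` hplane (inord k) (b ord0 (inord k)))
  else setT.
have -> : obox a b = \bigcap_k G k.
  apply/seteqP; split => x.
    move=> hx k _; rewrite /G; case: ltnP => // kd.
    have [h1 h2] := hx (inord k); split => //.
    move=> [|]; rewrite /hspace /hplane /=; lra.
  move=> hx i; have := hx (val i) Logic.I; rewrite /G ltn_ord inord_val.
  move=> [h1 h2]; split => //.
  rewrite ltNge le_eqVlt; apply/negP => /orP[/eqP e|lt]; apply: h2.
    by right.
  by left.
apply: bigcapT_measurable => k; rewrite /G; case: ltnP => _ //.
apply: measurableI; first exact: hspace_meas.
apply: measurableC; apply: measurableU; [exact: hspace_meas|exact: hplane_meas].
Qed.

End meas.

Section opens.
Variables (R : realType) (n : nat).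
Local Notation d := n.+1.
Local Notation V := 'rV[R]_d.
Local Notation U := (caratheodory_type (@lebesgue_outer R n.+1 : set (pT R n.+1) -> \bar R)).

Definition eopen (W : set V) := forall x, W x -> exists2 rho : R, (0 < rho)%R &
  forall w : V, (forall j, `|w ord0 j - x ord0 j| < rho)%R -> W w.

Definition rbox (pq : 'rV[rat]_d * 'rV[rat]_d) : set V :=
  obox (map_mx ratr pq.1) (map_mx ratr pq.2).

Lemma eopen_meas W : eopen W -> measurable (W : set U).
Proof.
move=> oW.
pose F k : set U := match unpickle k with
  | Some pq => if pselect (rbox pq `<=` W) then rbox pq else set0
  | None => set0 end.
have WF : W = \bigcup_k F k.
  apply/seteqP; split => [x Wx|x [k _]]; last first.
    rewrite /F; case: unpickle => [pq|] //; case: pselect => // sub; exact: sub.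
  have [rho rho0 hrho] := oW x Wx.
  have hp j : exists q : rat, (x ord0 j - rho < ratr q < x ord0 j)%R.
    have : (x ord0 j - rho < x ord0 j)%R by lra.
    by move=> /rat_in_itvoo [q]; rewrite in_itv /=; exists q.
  have hq j : exists q : rat, (x ord0 j < ratr q < x ord0 j + rho)%R.
    have : (x ord0 j < x ord0 j + rho)%R by lra.
    by move=> /rat_in_itvoo [q]; rewrite in_itv /=; exists q.
  have [p hp'] := choice hp; have [q hq'] := choice hq.
  pose P : 'rV[rat]_d := \row_j p j; pose Q : 'rV[rat]_d := \row_j q j.
  have sub : rbox (P, Q) `<=` W.
    move=> w hw; apply: hrho => j; have [h1 h2] := hw j.
    move: h1 h2; rewrite /= !mxE => h1 h2.
    have := hp' j; have := hq' j => /andP[? ?] /andP[? ?].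
    rewrite ltr_norml; apply/andP; split; lra.
  exists (pickle (P, Q)) => //; rewrite /F pickleK /=.
  case: pselect => [_|//] j; rewrite /= !mxE; have := hp' j; have := hq' j => /andP[? ?] /andP[? ?]; split; lra.
rewrite WF; apply: bigcupT_measurable => k; rewrite /F; case: unpickle => [pq|]; last exact: measurable0.
case: pselect => h /=; [exact: obox_meas | exact: measurable0].
Qed.

Lemma edistC (x y : V) : Defs.edist x y = Defs.edist y x.
Proof. rewrite /Defs.edist; congr Num.sqrt; apply: eq_bigr => j _; by rewrite -sqrrN opprB. Qed.

Lemma edist_lt (x y : V) (r : R) : (0 < r)%R ->
  (Defs.edist x y < r)%R = (\sum_j (y ord0 j - x ord0 j)^+2 < r^+2)%R.
Proof.
move=> r0; rewrite /Defs.edist -{1}(ger0_norm (ltW r0)) -sqrtr_sqr ltr_sqrt //.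
exact: exprn_gt0.
Qed.

Lemma edistxx (x : V) : Defs.edist x x = 0%R.
Proof. by rewrite /Defs.edist big1 ?sqrtr0 // => j _; rewrite subrr expr0n. Qed.

Lemma ball_open (y : V) (r : R) : (0 < r)%R -> eopen [set w | (Defs.edist y w < r)%R].
Proof.
move=> r0 x; rewrite /= edist_lt // => hx.
set s0 := (\sum_j (x ord0 j - y ord0 j)^+2)%R in hx.
pose C := (\sum_j (2 * `|x ord0 j - y ord0 j| + 1))%R.
have C0 : (0 <= C)%R.
  by apply: sumr_ge0 => j _; apply: addr_ge0 => //; apply: mulr_ge0.
pose t := (r^+2 - s0)%R.
have t0 : (0 < t)%R by rewrite /t subr_gt0.
pose q := (t / (C + 1))%R.
have q0 : (0 < q)%R by rewrite divr_gt0 // ltr_wpDl.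
have qe : (q * (C + 1) = t)%R by rewrite /q; field; lra.
pose rho := Num.min 1%R q.
have rho1 : (rho <= 1)%R by rewrite ge_min lexx.
have rhoq : (rho <= q)%R by rewrite ge_min lexx orbT.
exists rho; first by rewrite lt_min ltr01 q0.
move=> w hw; rewrite /= edist_lt //.
have le1 : (\sum_j (w ord0 j - y ord0 j)^+2 <=
    \sum_j ((x ord0 j - y ord0 j)^+2 + rho * (2 * `|x ord0 j - y ord0 j| + 1)))%R.
  apply: ler_sum => j _.
  have -> : (w ord0 j - y ord0 j = (x ord0 j - y ord0 j) + (w ord0 j - x ord0 j))%R.
    by ring.
  move: (hw j); set e := (w ord0 j - x ord0 j)%R; set u := (x ord0 j - y ord0 j)%R => he.
  have h1 : (u * e <= `|u| * `|e|)%R by rewrite -normrM ler_norm.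
  have h2 : (e ^+ 2 = `|e| ^+ 2)%R by rewrite real_normK // num_real.
  have h3 : (0 <= `|u|)%R by [].
  have h4 : (0 <= `|e|)%R by [].
  have h5 : (`|u| * `|e| <= `|u| * rho)%R by rewrite ler_wpM2l // ltW.
  have h6 : (`|e| ^+ 2 <= rho)%R.
    rewrite expr2; apply: (le_trans (y := (`|e| * 1)%R)).
      by rewrite ler_wpM2l // (le_trans (ltW he)).
    by rewrite mulr1 ltW.
  have -> : ((u + e) ^+ 2 = u ^+ 2 + 2 * (u * e) + `|e| ^+ 2)%R by rewrite -h2; ring.
  lra.
rewrite big_split /= -mulr_sumr -/s0 -/C in le1.
apply: le_lt_trans le1 _.
have : (rho * C <= q * C)%R by rewrite ler_wpM2r.
have : (q * C = t - q)%R by rewrite -qe; ring.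
rewrite /t; lra.
Qed.

Lemma eopenI (A B : set V) : eopen A -> eopen B -> eopen (A `&` B).
Proof.
move=> oA oB x [Ax Bx].
have [r1 r10 h1] := oA x Ax; have [r2 r20 h2] := oB x Bx.
exists (Num.min r1 r2); first by rewrite lt_min r10 r20.
move=> w hw; split; [apply: h1 | apply: h2] => j; apply: (lt_le_trans (hw j));
  rewrite ge_min lexx ?orbT //.
Qed.

End opens.
Arguments eopen {R n}.
Arguments eopenI {R n A B}.
Arguments ball_open {R n} y {r}.
Arguments eopen_meas {R n W}.
Arguments edistC {R n}.
Arguments edistxx {R n}.

Section oscsec.
Variables (R : realType) (n : nat).
Local Notation d := n.+1.
Local Notation V := 'rV[R]_d.
Local Notation U := (caratheodory_type (@lebesgue_outer R n.+1 : set (pT R n.+1) -> \bar R)).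
Local Open Scope ereal_scope.

Definition Wt (D : set V) (r : R) (f : V -> R) (t : R) : set V :=
  [set x | exists y z, D y /\ D z /\ (Defs.edist x y < r)%R /\
     (Defs.edist x z < r)%R /\ (t < f y - f z)%R].

Lemma Wt_open (D : set V) (r : R) f t : (0 < r)%R -> eopen (Wt D r f t).
Proof.
move=> r0 x [y [z [Dy [Dz [hy [hz ht]]]]]].
have := eopenI (ball_open y r0) (ball_open z r0) x.
case; first by split => /=; rewrite edistC.
move=> rho rho0 h; exists rho => // w /h [/= h1 h2].
by exists y, z; rewrite (edistC w y) (edistC w z).
Qed.

Lemma osc_gt (D : set V) (r : R) (f : V -> R) x t : (0 < r)%R -> D x ->
  (t%:E < osc D r f x) <-> Wt D r f t x.
Proof.
move=> r0 Dx; rewrite /osc; set S := [set _ | _ in _].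
split; last first.
  move=> [y [z [Dy [Dz [hy [hz ht]]]]]].
  have Sy : S (f y)%:E by exists y.
  have Sz : S (f z)%:E by exists z.
  apply: (@lt_le_trans _ _ (f y - f z)%:E); first by rewrite lte_fin.
  rewrite EFinB; apply: leeB; [exact: ereal_sup_ubound | exact: ereal_inf_lbound].
move=> ht; apply: contrapT => nW.
have hb y z : D y -> D z -> (Defs.edist x y < r)%R -> (Defs.edist x z < r)%R ->
    (f y - f z <= t)%R.
  move=> Dy Dz hy hz; rewrite leNgt; apply/negP => lt; apply: nW.
  by exists y, z.
have Sx : S (f x)%:E by exists x => //; split => //; rewrite /eball /= edistxx.
have supz z : D z -> (Defs.edist x z < r)%R -> ereal_sup S <= (t + f z)%:E.
  move=> Dz hz; apply: ge_ereal_sup => _ [y [hy Dy] <-].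
  by rewrite lee_fin; have := hb y z Dy Dz hy hz; lra.
have s1 : (f x)%:E <= ereal_sup S by exact: ereal_sup_ubound.
have s2 := supz x Dx (ltac:(by rewrite edistxx)).
have i1 : ereal_inf S <= (f x)%:E by exact: ereal_inf_lbound.
case Es: (ereal_sup S) s1 s2 supz => [s| |] s1 s2 supz; last 2 first.
- by [].
- by [].
have i2 : (s - t)%:E <= ereal_inf S.
  apply: le_ereal_inf_tmp => _ [z [hz Dz] <-].
  by have := supz z Dz hz; rewrite lee_fin => ?; rewrite lee_fin; lra.
case Ei: (ereal_inf S) i1 i2 => [i| |] i1 i2; last 2 first.
- by [].
- by [].
move: ht; rewrite Es Ei -EFinB lte_fin; rewrite lee_fin in i2; lra.
Qed.

Lemma osc_meas (D : set V) (r : R) (f : V -> R) : (0 < r)%R ->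
  measurable (D : set U) -> measurable_fun (D : set U) (osc D r f : U -> \bar R).
Proof.
move=> r0 mD.
have mE : @measurable _ (\bar R) = <<s @ErealGenOInfty.G R >>.
  exact: ErealGenOInfty.measurableE.
apply: (measurability _ mE).
move=> _ [_ [t ->] <-].
have -> : D `&` osc D r f @^-1` `]t%:E, +oo[%classic = D `&` Wt D r f t.
  apply/seteqP; split => x [Dx hx]; split => //.
    by apply/(osc_gt _ _ _ _ _ r0 Dx); move: hx; rewrite /= in_itv /= andbT.
  by rewrite /= in_itv /= andbT; apply/(osc_gt _ _ _ _ _ r0 Dx).
apply: measurableI => //; apply: eopen_meas; exact: Wt_open.
Qed.

End oscsec.

Theorem lemma1 (R : realType) (d : nat) (hd : (1 <= d)%N)
  (D : set 'rV[R]_d) (hD : Lmeasurable D) (r : R) (hr : 0 < r)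
  (f : 'rV[R]_d -> R) :
  forall B : set (\bar R), measurable B ->
    Lmeasurable (D `&` (osc D r f) @^-1` B).
Proof.
move: hd D hD f; case: d => [//|n] _ D hD f B mB.
exact: (@osc_meas R n D r f hr hD hD B mB).
Qed.
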